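(* Fix $n\in\mathbb N$. In the $q$-shuffle algebra $\mathbb V$, each of the following pairs of sets (with $i,j$ ranging over $\mathbb N$ with $i+j=n$) have the same linear span: (1) $\{G_i\star W_{-j}\}$ and $\{W_{-j}\star G_i\}$; (2) $\{G_i\star W_{j+1}\}$ and $\{W_{j+1}\star G_i\}$; (3) $\{\tilde G_i\star W_{-j}\}$ and $\{W_{-j}\star\tilde G_i\}$; (4) $\{\tilde G_i\star W_{j+1}\}$ and $\{W_{j+1}\star \tilde G_i\}$.
   Context: Let $\mathbb F$ be a field and let $q\in\mathbb F$ be nonzero and not a root of unity. Let $\mathbb V$ be the free associative $\mathbb F$-algebra on noncommuting $x,y$, with basis the words (including $1$). Juxtaposition denotes concatenation. Set $\langle x,x\rangle=\langle y,y\rangle=2$ and $\langle x,y\rangle=\langle y,x\rangle=-2$. The $q$-shuffle product $\star$ is the bilinear product determined as follows: - $1\star v=v\star 1=v$; - for nontrivial words $u=u_1\cdots u_r$ and $v=v_1\cdots v_s$, $$u\star v=u_1((u_2\cdots u_r)\star v)+v_1(u\star(v_2\cdots v_s))q^{\langle u_1,v_1\rangle+\cdots+\langle u_r,v_1\rangle}.$$ This makes $\mathbb V$ an associative algebra, the $q$-shuffle algebra. For $k\in\mathbb N$: - $W_{-k}=xyx\cdots x$ is the alternating word of length $2k+1$ beginning and ending with $x$; - $W_{k+1}=yxy\cdots y$ is the alternating word of length $2k+1$ beginning and ending with $y$; - $G_k=yxyx\cdots yx$ is the word of length $2k$; - $\tilde G_k=xyxy\cdots xy$ is the word of length $2k$;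 - $G_0=\tilde G_0=1$. *)

(* Defs.v *)
From mathcomp Require Import all_boot all_algebra.
Set Implicit Arguments. Unset Strict Implicit. Unset Printing Implicit Defensive.
Import GRing.Theory Num.Theory.
Local Open Scope ring_scope.

Definition letter := bool.
Definition lx : letter := false.
Definition ly : letter := true.
Definition word := seq letter.

Section QShuffle.
Variables (F : fieldType) (q : F).

(* Elements of V are represented by their coefficient function on words
   (every element we build is finitely supported). *)
Definition V := word -> F.

Definition vdelta (v : word) : V := fun w => if w == v then 1 else 0.

Definition vcons (a : letter) (f : V) : V :=
  fun w => match w with
           | b :: w' => if b == a then f w' else 0
           | [::] => 0
           end.

Definition vadd (f g : V) : V := fun w => f w + g w.
Definition vscale (c : F) (f : V) : V := fun w => c * f w.

Definition pairing (a b : letter) : int := if a == b then 2%:Z else - 2%:Z.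

Definition wpair (u : word) (b : letter) : int := \sum_(a <- u) pairing a b.

Fixpoint qsh (u v : word) {struct u} : V :=
  match u with
  | [::] => vdelta v
  | a :: u' =>
      let fix inner (v : word) : V :=
        match v with
        | [::] => vdelta (a :: u')
        | b :: v' => vadd (vcons a (qsh u' v))
                          (vscale (q ^ wpair (a :: u') b) (vcons b (inner v')))
        end
      in inner v
  end.

Definition in_span (f : V) (gs : seq V) : Prop :=
  exists c : nat -> F,
    forall w, f w = \sum_(k < size gs) c k * nth (fun _ => 0) gs k w.

Definition same_span (fs gs : seq V) : Prop :=
  (forall k, (k < size fs)%N -> in_span (nth (fun _ => 0) fs k) gs) /\
  (forall k, (k < size gs)%N -> in_span (nth (fun _ => 0) gs k) fs).

End QShuffle.

Definition Gw (k : nat) : word := flatten (nseq k [:: ly; lx]).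
Definition tGw (k : nat) : word := flatten (nseq k [:: lx; ly]).
(* W_{-k} = xyx...x, W_{k+1} = yxy...y, both of length 2k+1 *)
Definition Wneg (k : nat) : word := lx :: Gw k.
Definition Wpos (k : nat) : word := ly :: tGw k.

Definition not_root_of_unity (F : fieldType) (q : F) : Prop :=
  q != 0 /\ forall k : nat, (0 < k)%N -> q ^+ k != 1.

(* Main.v *)
Require Import Defs.
From mathcomp Require Import all_boot all_algebra.
From mathcomp Require Import ring zify.
From Stdlib Require Import FunctionalExtensionality.
Set Implicit Arguments. Unset Strict Implicit. Unset Printing Implicit Defensive.
Import GRing.Theory.
Local Open Scope ring_scope.

Definition vsnoc (F : fieldType) (a : letter) (f : V F) : V F :=
  fun w => if rev w is c :: w' then (if c == a then f (rev w') else 0) else 0.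
Definition vrev (F : fieldType) (f : V F) : V F := fun w => f (rev w).

Lemma vsnoc_rcons (F : fieldType) a (f : V F) w c :
  vsnoc a f (rcons w c) = if c == a then f w else 0.
Proof. by rewrite /vsnoc rev_rcons revK. Qed.

Lemma vsnoc_vcons (F : fieldType) a b (f : V F) :
  vsnoc a (vcons b f) = vcons b (vsnoc a f).
Proof.
apply: functional_extensionality => w; case/lastP: w => [//|w c].
rewrite vsnoc_rcons; case: w => [|d w] /=; first by case: (c == a); case: (c == b).
by rewrite vsnoc_rcons; case: (c == a); case: (d == b).
Qed.

Lemma vcons_delta (F : fieldType) a v : vcons a (vdelta F v) = vdelta F (a :: v).
Proof.
apply: functional_extensionality => w; case: w => [|c w] //=.
by rewrite /vdelta eqseq_cons; case: (c == a).
Qed.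

Lemma vsnoc_delta (F : fieldType) a v : vsnoc a (vdelta F v) = vdelta F (rcons v a).
Proof.
apply: functional_extensionality => w; case/lastP: w => [|w c].
  by rewrite /vdelta /vsnoc /=; case: v.
by rewrite vsnoc_rcons /vdelta eqseq_rcons andbC; case: (c == a).
Qed.

Lemma vrev_vcons (F : fieldType) a (f : V F) : vrev (vcons a f) = vsnoc a (vrev f).
Proof.
apply: functional_extensionality => w; case/lastP: w => [//|w c].
by rewrite vsnoc_rcons /vrev rev_rcons.
Qed.

Lemma vrev_vsnoc (F : fieldType) a (f : V F) : vrev (vsnoc a f) = vcons a (vrev f).
Proof.
apply: functional_extensionality => w; case: w => [//|c w].
by rewrite /vrev rev_cons vsnoc_rcons.
Qed.

Lemma vrev_delta (F : fieldType) v : vrev (vdelta F v) = vdelta F (rev v).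
Proof.
apply: functional_extensionality => w.
by rewrite /vrev /vdelta (can2_eq revK revK).
Qed.

Lemma vrev_vadd (F : fieldType) (f g : V F) : vrev (vadd f g) = vadd (vrev f) (vrev g).
Proof. by []. Qed.
Lemma vrev_vscale (F : fieldType) k (f : V F) : vrev (vscale k f) = vscale k (vrev f).
Proof. by []. Qed.

Lemma vcons_vadd (F : fieldType) a (f g : V F) :
  vcons a (vadd f g) = vadd (vcons a f) (vcons a g).
Proof.
apply: functional_extensionality => w; case: w => [|c w] /=; rewrite /vadd /=.
  by rewrite addr0.
by case: (c == a); rewrite ?addr0.
Qed.

Lemma vcons_vscale (F : fieldType) a k (f : V F) :
  vcons a (vscale k f) = vscale k (vcons a f).
Proof.
apply: functional_extensionality => w; case: w => [|c w] /=; rewrite /vscale /=.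
  by rewrite mulr0.
by case: (c == a); rewrite ?mulr0.
Qed.

Lemma vsnoc_vadd (F : fieldType) a (f g : V F) :
  vsnoc a (vadd f g) = vadd (vsnoc a f) (vsnoc a g).
Proof.
apply: functional_extensionality => w; case/lastP: w => [|w c].
  by rewrite /vadd /vsnoc /= addr0.
by rewrite /vadd !vsnoc_rcons; case: (c == a); rewrite ?addr0.
Qed.

Lemma vsnoc_vscale (F : fieldType) a k (f : V F) :
  vsnoc a (vscale k f) = vscale k (vsnoc a f).
Proof.
apply: functional_extensionality => w; case/lastP: w => [|w c].
  by rewrite /vscale /vsnoc /= mulr0.
by rewrite /vscale !vsnoc_rcons; case: (c == a); rewrite ?mulr0.
Qed.

Lemma vscale_vadd (F : fieldType) k (f g : V F) :
  vscale k (vadd f g) = vadd (vscale k f) (vscale k g).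
Proof. by apply: functional_extensionality => w; rewrite /vscale /vadd mulrDr. Qed.

Lemma vscale_vscale (F : fieldType) k l (f : V F) :
  vscale k (vscale l f) = vscale (k * l) f.
Proof. by apply: functional_extensionality => w; rewrite /vscale mulrA. Qed.

Lemma vscale1 (F : fieldType) (f : V F) : vscale 1 f = f.
Proof. by apply: functional_extensionality => w; rewrite /vscale mul1r. Qed.

Lemma qsh_nil_l (F : fieldType) (q : F) v : qsh q [::] v = vdelta F v.
Proof. by []. Qed.
Lemma qsh_nil_r (F : fieldType) (q : F) u : qsh q u [::] = vdelta F u.
Proof. by case: u. Qed.
Lemma qsh_cons (F : fieldType) (q : F) a u b v :
  qsh q (a :: u) (b :: v) =
  vadd (vcons a (qsh q u (b :: v)))
       (vscale (q ^ wpair (a :: u) b) (vcons b (qsh q (a :: u) v))).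
Proof. by []. Qed.

Lemma wpair_cons a u b : wpair (a :: u) b = pairing a b + wpair u b.
Proof. by rewrite /wpair big_cons. Qed.
Lemma wpair_nil b : wpair [::] b = 0.
Proof. by rewrite /wpair big_nil. Qed.
Lemma wpair_rcons u a b : wpair (rcons u a) b = wpair u b + pairing a b.
Proof. by rewrite /wpair -cats1 big_cat big_seq1. Qed.
Lemma wpair_rev u b : wpair (rev u) b = wpair u b.
Proof. by rewrite /wpair big_rev. Qed.
Lemma pairingC a b : pairing a b = pairing b a.
Proof. by rewrite /pairing eq_sym. Qed.


Ltac vnorm := rewrite ?vcons_vadd ?vcons_vscale ?vsnoc_vadd ?vsnoc_vscale ?vsnoc_vcons
  ?vscale_vadd ?vscale_vscale ?vcons_delta ?vsnoc_delta ?rcons_cons.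
Ltac enorm := rewrite ?wpair_cons ?wpair_rcons ?wpair_nil ?addr0 ?expfzDr //.
Ltac vfin := apply: functional_extensionality => ?; rewrite /vadd /vscale; ring.

Lemma qsh_rcons (F : fieldType) (q : F) (hq : q != 0) u v a b :
  qsh q (rcons u a) (rcons v b) =
  vadd (vscale (q ^ wpair (rcons v b) a) (vsnoc a (qsh q u (rcons v b))))
       (vsnoc b (qsh q (rcons u a) v)).
Proof.
elim: u v => [|c u1 IHu] v.
  elim: v => [|d v1 IHv].
    change (rcons [::] a) with [:: a]; change (rcons [::] b) with [:: b].
    rewrite qsh_cons !qsh_nil_l !qsh_nil_r; vnorm; enorm.
    rewrite (pairingC b a). vfin.
  change (rcons [::] a) with [:: a] in IHv |- *.
  rewrite rcons_cons !qsh_cons IHv !qsh_nil_l; vnorm; vnorm; enorm.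
  rewrite (pairingC d a); vfin.
elim: v => [|d v1 IHv].
  change (rcons [::] b) with [:: b].
  rewrite rcons_cons !qsh_cons (IHu [::]) !qsh_nil_r; vnorm; vnorm; enorm.
  change (rcons [::] b) with [:: b]; rewrite (pairingC b a); vfin.
have E1 := IHu (d :: v1); rewrite !rcons_cons in E1 IHv.
rewrite !rcons_cons !qsh_cons E1 IHv; vnorm; vnorm; enorm.
rewrite (pairingC d a); vfin.
Qed.

Lemma qsh_rev (F : fieldType) (q : F) (hq : q != 0) u v :
  qsh q (rev u) (rev v) = vrev (qsh q v u).
Proof.
elim/last_ind: u v => [|u' a IHu] v.
  by rewrite /= ?qsh_nil_l ?qsh_nil_r vrev_delta.
elim/last_ind: v => [|v' b IHv].
  by rewrite /= ?qsh_nil_l ?qsh_nil_r vrev_delta.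
rewrite !rev_rcons qsh_cons -(rev_rcons v' b) -(rev_rcons u' a) IHu IHv.
rewrite qsh_rcons // vrev_vadd vrev_vscale !vrev_vsnoc wpair_rev.
by vfin.
Qed.


Ltac gen_qsh := repeat match goal with |- context [qsh ?q ?u ?v] => generalize (qsh q u v); intro end.

Definition Gl (a : letter) (i : nat) : word := flatten (nseq i [:: ~~ a; a]).
Definition Wl (a : letter) (i : nat) : word := a :: Gl a i.

Lemma Gl0 a : Gl a 0%N = [::]. Proof. by []. Qed.
Lemma GlS a i : Gl a i.+1 = ~~ a :: Wl a i. Proof. by []. Qed.

Lemma wpair_Gl a i c : wpair (Gl a i) c = 0.
Proof.
elim: i => [|i IH]; first by rewrite Gl0 wpair_nil.
by rewrite GlS /Wl !wpair_cons IH addr0 /pairing; clear IH; case: a; case: c.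
Qed.

Lemma wpair_Wl a i : wpair (Wl a i) a = 2%:Z.
Proof. by rewrite /Wl wpair_cons wpair_Gl addr0 /pairing eqxx. Qed.
Lemma wpair_Wl' a i : wpair (Wl a i) (~~ a) = - 2%:Z.
Proof. by rewrite /Wl wpair_cons wpair_Gl addr0 /pairing; case: a. Qed.

Lemma R1 (F : fieldType) (q : F) a i j : qsh q (Gl a i.+1) (Wl a j) =
  vadd (vcons (~~ a) (qsh q (Wl a i) (Wl a j))) (vcons a (qsh q (Gl a i.+1) (Gl a j))).
Proof.
rewrite {1}GlS {1}/Wl qsh_cons -GlS wpair_Gl expr0z vscale1. by rewrite /Wl.
Qed.

Lemma R2 (F : fieldType) (q : F) a i j : qsh q (Wl a j) (Gl a i.+1) =
  vadd (vcons a (qsh q (Gl a j) (Gl a i.+1)))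
       (vscale (q ^ (- 2%:Z)) (vcons (~~ a) (qsh q (Wl a j) (Wl a i)))).
Proof.
change (qsh q (Wl a j) (Gl a i.+1)) with (qsh q (a :: Gl a j) (~~ a :: Wl a i)).
rewrite qsh_cons -GlS.
by change (a :: Gl a j) with (Wl a j); rewrite wpair_Wl'.
Qed.

Lemma R3 (F : fieldType) (q : F) a i j : qsh q (Gl a i.+1) (Gl a j.+1) =
  vadd (vcons (~~ a) (qsh q (Wl a i) (Gl a j.+1)))
       (vcons (~~ a) (qsh q (Gl a i.+1) (Wl a j))).
Proof.
by rewrite !GlS qsh_cons -!GlS wpair_Gl expr0z vscale1.
Qed.

Lemma R4 (F : fieldType) (q : F) a i j : qsh q (Wl a i) (Wl a j) =
  vadd (vcons a (qsh q (Gl a i) (Wl a j)))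
       (vscale (q ^ 2%:Z) (vcons a (qsh q (Wl a i) (Gl a j)))).
Proof.
change (qsh q (Wl a i) (Wl a j)) with (qsh q (a :: Gl a i) (a :: Gl a j)).
rewrite qsh_cons.
by change (a :: Gl a i) with (Wl a i); change (a :: Gl a j) with (Wl a j); rewrite wpair_Wl.
Qed.

Lemma vdeltaW (F : fieldType) a k : vdelta F (Wl a k) = vcons a (vdelta F (Gl a k)).
Proof. by rewrite vcons_delta. Qed.

Lemma qshG0l (F : fieldType) (q : F) a v : qsh q (Gl a 0%N) v = vdelta F v.
Proof. by []. Qed.
Lemma qshG0r (F : fieldType) (q : F) a u : qsh q u (Gl a 0%N) = vdelta F u.
Proof. exact: qsh_nil_r. Qed.

Lemma qq (F : fieldType) (q : F) (hq : q != 0) : q ^ 2%:Z * q ^ (- 2%:Z) = 1.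
Proof. by rewrite -expfzDr // addrN expr0z. Qed.

Lemma comm (F : fieldType) (q : F) (hq : q != 0) a s : forall i j, (i + j <= s)%N ->
  qsh q (Gl a i) (Gl a j) = qsh q (Gl a j) (Gl a i) /\
  qsh q (Wl a i) (Wl a j) = qsh q (Wl a j) (Wl a i).
Proof.
elim: s => [|s IH] i j hij.
  by have [-> ->] : i = 0%N /\ j = 0%N by lia.
have HG : qsh q (Gl a i) (Gl a j) = qsh q (Gl a j) (Gl a i).
  case: i hij => [|i] hij; first by rewrite Gl0 qsh_nil_l qsh_nil_r.
  case: j hij => [|j] hij; first by rewrite Gl0 qsh_nil_l qsh_nil_r.
  rewrite !R3 !R2 !R1 (IH j i.+1 ltac:(lia)).1 (IH j.+1 i ltac:(lia)).1 (IH j i ltac:(lia)).2.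
  by gen_qsh; vnorm; vfin.
split => //.
have W0 : forall k, (k <= s.+1)%N -> qsh q (Wl a 0%N) (Wl a k) = qsh q (Wl a k) (Wl a 0%N).
  case => [|k] hk //.
  rewrite !R4 R2 R1 (qshG0l q a (Wl a k.+1)) (qshG0l q a (Gl a k.+1)).
  rewrite (qshG0r q a (Gl a k.+1)) (qshG0r q a (Wl a k.+1)) (IH 0%N k ltac:(lia)).2 !vdeltaW.
  by gen_qsh; vnorm; rewrite qq // vscale1; vfin.
case: i hij HG => [|i] hij HG; first by apply: W0; lia.
case: j hij HG => [|j] hij HG; first by rewrite W0 //; lia.
rewrite !R4 !R1 !R2 (IH j i.+1 ltac:(lia)).2 (IH j.+1 i ltac:(lia)).2 -HG.
by gen_qsh; vnorm; rewrite qq // vscale1; vfin.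
Qed.


Lemma in_span_ext (F : fieldType) (f g : V F) gs :
  (forall w, f w = g w) -> in_span g gs -> in_span f gs.
Proof. by move=> e [c hc]; exists c => w; rewrite e hc. Qed.

Lemma in_span0 (F : fieldType) (gs : seq (V F)) : in_span (fun _ => 0) gs.
Proof. by exists (fun _ => 0) => w; rewrite big1 // => i _; rewrite mul0r. Qed.

Lemma in_span_add (F : fieldType) (f g : V F) gs :
  in_span f gs -> in_span g gs -> in_span (fun w => f w + g w) gs.
Proof.
move=> [c hc] [d hd]; exists (fun k => c k + d k) => w.
by rewrite hc hd -big_split /=; apply: eq_bigr => i _; rewrite mulrDl.
Qed.

Lemma in_span_scale (F : fieldType) k (f : V F) gs :
  in_span f gs -> in_span (fun w => k * f w) gs.
Proof.
move=> [c hc]; exists (fun j => k * c j) => w.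
by rewrite hc mulr_sumr; apply: eq_bigr => i _; rewrite mulrA.
Qed.

Lemma in_span_nth (F : fieldType) (gs : seq (V F)) k :
  (k < size gs)%N -> in_span (nth (fun _ => 0) gs k) gs.
Proof.
move=> hk; exists (fun j => if j == k then 1 else 0) => w.
rewrite (bigD1 (Ordinal hk)) //= eqxx mul1r big1 ?addr0 // => i hi.
have -> : (nat_of_ord i == k) = false.
  by apply/negbTE; move: hi; apply: contra => /eqP e; apply/eqP/val_inj.
by rewrite mul0r.
Qed.

Lemma nth_fam (F : fieldType) (f : nat -> V F) n i :
  (i <= n)%N -> nth (fun _ => 0) [seq f j | j <- iota 0 n.+1] i = f i.
Proof. by move=> hi; rewrite (nth_map 0%N) ?size_iota // nth_iota. Qed.

Lemma span_gen (F : fieldType) n (av bv fB : nat -> V F) (c : F) :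
  c != 0 -> (forall w, bv 0%N w = 0) ->
  (forall i, (i <= n)%N -> av (n - i)%N = av i) ->
  (forall k, (k < n)%N -> bv (n - k)%N = bv k.+1) ->
  (forall i, (i <= n)%N -> forall w, fB i w = av i w + c * bv i w) ->
  forall k, (k <= n)%N ->
    in_span (av k) [seq fB j | j <- iota 0 n.+1] /\
    in_span (bv k) [seq fB j | j <- iota 0 n.+1].
Proof.
move=> c0 b0 asym bsym hB.
have mem : forall i, (i <= n)%N -> in_span (fB i) [seq fB j | j <- iota 0 n.+1].
  move=> i hi; rewrite -{1}(nth_fam fB hi); apply: in_span_nth.
  by rewrite size_map size_iota.
elim=> [|k IH] hk.
  split; last by apply: in_span_ext (in_span0 _) => w; rewrite b0.
  apply: in_span_ext (mem 0%N hk) => w; by rewrite hB // b0 mulr0 addr0.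
have [ha _] := IH (ltnW hk).
have hb : in_span (bv k.+1) [seq fB j | j <- iota 0 n.+1].
  have e : forall w, bv k.+1 w = c^-1 * (fB (n - k)%N w + (-1) * av k w).
    move=> w; rewrite hB ?leq_subr // bsym // asym ?(ltnW hk) //.
    by field.
  apply: in_span_ext e _; apply: in_span_scale; apply: in_span_add.
    by apply: mem; rewrite leq_subr.
  exact: in_span_scale.
split => //.
have e : forall w, av k.+1 w = fB k.+1 w + (-c) * bv k.+1 w.
  by move=> w; rewrite hB //; ring.
apply: in_span_ext e _; apply: in_span_add; first exact: mem.
exact: in_span_scale.
Qed.

Lemma span_main (F : fieldType) n (av bv fA fB : nat -> V F) (c : F) :
  c != 0 -> (forall w, bv 0%N w = 0) ->
  (forall i, (i <= n)%N -> av (n - i)%N = av i) ->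
  (forall k, (k < n)%N -> bv (n - k)%N = bv k.+1) ->
  (forall i, (i <= n)%N -> forall w, fA i w = av i w + bv i w) ->
  (forall i, (i <= n)%N -> forall w, fB i w = av i w + c * bv i w) ->
  same_span [seq fA j | j <- iota 0 n.+1] [seq fB j | j <- iota 0 n.+1].
Proof.
move=> c0 b0 asym bsym hA hB.
have hA' : forall i, (i <= n)%N -> forall w, fA i w = av i w + 1 * bv i w.
  by move=> i hi w; rewrite mul1r; apply: hA.
have SA := span_gen (oner_neq0 F) b0 asym bsym hA'.
have SB := span_gen c0 b0 asym bsym hB.
split=> k; rewrite size_map size_iota ltnS => hk; rewrite nth_fam //.
  have [h1 h2] := SB k hk.
  by apply: in_span_ext (in_span_add h1 h2) => w; rewrite hA.
have [h1 h2] := SA k hk.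
by apply: in_span_ext (in_span_add h1 (in_span_scale c h2)) => w; rewrite hB.
Qed.


Lemma caseG (F : fieldType) (q : F) (hq : q != 0) a n :
  same_span [seq qsh q (Gl a i) (Wl a (n - i)) | i <- iota 0 n.+1]
            [seq qsh q (Wl a (n - i)) (Gl a i) | i <- iota 0 n.+1].
Proof.
apply: (@span_main F n (fun i => vcons a (qsh q (Gl a i) (Gl a (n - i))))
  (fun i => if i is k.+1 then vcons (~~ a) (qsh q (Wl a k) (Wl a (n - i))) else (fun _ => 0))
  (fun i => qsh q (Gl a i) (Wl a (n - i))) (fun i => qsh q (Wl a (n - i)) (Gl a i))
  (q ^ (- 2%:Z))).
- exact: expfz_neq0.
- by [].
- move=> i hi /=; rewrite subKn //; congr vcons.
  exact: (comm hq a (s := n) (i := (n - i)%N) (j := i) ltac:(lia)).1.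
- move=> k hk /=.
  have -> : (n - k)%N = (n - k.+1).+1 by lia.
  have -> : (n - (n - k.+1).+1)%N = k by lia.
  congr vcons; exact: (comm hq a (s := n) (i := (n - k.+1)%N) (j := k) ltac:(lia)).2.
- move=> i hi w; case: i hi => [|i] hi.
    by rewrite qshG0l subn0 vdeltaW addr0.
  by rewrite R1 /vadd addrC.
- move=> i hi w; case: i hi => [|i] hi.
    by rewrite qshG0r subn0 vdeltaW mulr0 addr0.
  rewrite R2 /vadd /vscale (comm hq a (s := n) (i := (n - i.+1)%N) (j := i.+1) ltac:(lia)).1.
  by rewrite (comm hq a (s := n) (i := (n - i.+1)%N) (j := i) ltac:(lia)).2.
Qed.


Lemma flat_rcons (x y : letter) i :
  rcons (flatten (nseq i [:: x; y])) x = x :: flatten (nseq i [:: y; x]).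
Proof. by elim: i => [//|i IH] /=; rewrite IH. Qed.

Lemma flat_rev (x y : letter) i :
  rev (flatten (nseq i [:: x; y])) = flatten (nseq i [:: y; x]).
Proof.
elim: i => [//|i IH].
change (flatten (nseq i.+1 [:: x; y])) with (x :: y :: flatten (nseq i [:: x; y])).
by rewrite !rev_cons IH flat_rcons /= flat_rcons.
Qed.

Lemma rev_Gw i : rev (Gw i) = tGw i. Proof. exact: flat_rev. Qed.
Lemma rev_tGw i : rev (tGw i) = Gw i. Proof. exact: flat_rev. Qed.
Lemma rev_Wneg j : rev (Wneg j) = Wneg j.
Proof. by rewrite /Wneg rev_cons rev_Gw /tGw flat_rcons. Qed.
Lemma rev_Wpos j : rev (Wpos j) = Wpos j.
Proof. by rewrite /Wpos rev_cons rev_tGw /Gw flat_rcons. Qed.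

Lemma same_span_sym (F : fieldType) (fs gs : seq (V F)) :
  same_span fs gs -> same_span gs fs.
Proof. by case. Qed.

Lemma in_span_vrev (F : fieldType) (f : V F) gs :
  in_span f gs -> in_span (vrev f) (map (@vrev F) gs).
Proof.
move=> [c hc]; exists c => w; rewrite /vrev hc size_map.
apply: eq_bigr => i _; rewrite (nth_map (fun _ => 0)) //.
Qed.

Lemma same_span_vrev (F : fieldType) (fs gs : seq (V F)) :
  same_span fs gs -> same_span (map (@vrev F) fs) (map (@vrev F) gs).
Proof.
case=> h1 h2; split=> k; rewrite size_map => hk; rewrite (nth_map (fun _ => 0)) //;
  apply: in_span_vrev; [exact: h1 | exact: h2].
Qed.

Theorem proposition6p2 (F : fieldType) (q : F) (hq : not_root_of_unity q)
    (n : nat) :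
  let I := iota 0 n.+1 in
  same_span [seq qsh q (Gw i) (Wneg (n - i)) | i <- I]
            [seq qsh q (Wneg (n - i)) (Gw i) | i <- I] /\
  same_span [seq qsh q (Gw i) (Wpos (n - i)) | i <- I]
            [seq qsh q (Wpos (n - i)) (Gw i) | i <- I] /\
  same_span [seq qsh q (tGw i) (Wneg (n - i)) | i <- I]
            [seq qsh q (Wneg (n - i)) (tGw i) | i <- I] /\
  same_span [seq qsh q (tGw i) (Wpos (n - i)) | i <- I]
            [seq qsh q (Wpos (n - i)) (tGw i) | i <- I].
Proof.
move=> I; rewrite {}/I; case: hq => hq0 _.
have S1 : same_span [seq qsh q (Gw i) (Wneg (n - i)) | i <- iota 0 n.+1]
            [seq qsh q (Wneg (n - i)) (Gw i) | i <- iota 0 n.+1] := caseG hq0 lx n.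
have S4 : same_span [seq qsh q (tGw i) (Wpos (n - i)) | i <- iota 0 n.+1]
            [seq qsh q (Wpos (n - i)) (tGw i) | i <- iota 0 n.+1] := caseG hq0 ly n.
split => //; split; last split => //.
- have -> : [seq qsh q (Gw i) (Wpos (n - i)) | i <- iota 0 n.+1] =
            map (@vrev F) [seq qsh q (Wpos (n - i)) (tGw i) | i <- iota 0 n.+1].
    by rewrite -map_comp; apply: eq_map => i; rewrite /comp -qsh_rev // rev_tGw rev_Wpos.
  have -> : [seq qsh q (Wpos (n - i)) (Gw i) | i <- iota 0 n.+1] =
            map (@vrev F) [seq qsh q (tGw i) (Wpos (n - i)) | i <- iota 0 n.+1].
    by rewrite -map_comp; apply: eq_map => i; rewrite /comp -qsh_rev // rev_tGw rev_Wpos.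
  by apply: same_span_vrev; apply: same_span_sym.
- have -> : [seq qsh q (tGw i) (Wneg (n - i)) | i <- iota 0 n.+1] =
            map (@vrev F) [seq qsh q (Wneg (n - i)) (Gw i) | i <- iota 0 n.+1].
    by rewrite -map_comp; apply: eq_map => i; rewrite /comp -qsh_rev // rev_Gw rev_Wneg.
  have -> : [seq qsh q (Wneg (n - i)) (tGw i) | i <- iota 0 n.+1] =
            map (@vrev F) [seq qsh q (Gw i) (Wneg (n - i)) | i <- iota 0 n.+1].
    by rewrite -map_comp; apply: eq_map => i; rewrite /comp -qsh_rev // rev_Gw rev_Wneg.
  by apply: same_span_vrev; apply: same_span_sym.
Qed.
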